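(* Let $(X,d)$ be a finite ultrametric space with $|X|\geqslant 2$. If $(X,d)\in\mathfrak U$, then the diametral graph $G_d$ of $(X,d)$ is a complete bipartite graph.
   Context: For a metric space $(X,d)$, its spectrum is $\operatorname{Sp}(X)=\{d(x,y): x,y\in X,\ x\neq y\}$ and $\operatorname{diam}X=\sup\{d(x,y):x,y\in X\}$. $\mathfrak U$ denotes the class of finite ultrametric spaces $X$ with $|\operatorname{Sp}(X)|=|X|-1$. The diametral graph $G_d$ of $(X,d)$ is the graph with vertex set $X$ in which $\{u,v\}$ is an edge iff $d(u,v)=\operatorname{diam}X$. Graphs are simple undirected graphs $(V,E)$ with $V\neq\varnothing$. A nonempty graph $G$ is complete $k$-partite, written $G=G[X_1,\dots,X_k]$, if its vertex set is partitioned into $k$ disjoint nonempty sets $X_1,\dots,X_k$ such that no edge joins two vertices of the same $X_i$ and any two vertices from different parts are adjacent; complete bipartite means $k=2$. *)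

(* Defs.v *)
From mathcomp Require Import all_boot all_order all_algebra.
From mathcomp Require Import reals.
Set Implicit Arguments. Unset Strict Implicit. Unset Printing Implicit Defensive.
Import Order.TTheory GRing.Theory Num.Theory.
Local Open Scope ring_scope.

Definition is_ultrametric (R : realType) (X : finType) (d : X -> X -> R) : Prop :=
  [/\ (forall x y, 0 <= d x y),
      (forall x y, d x y = 0 <-> x = y),
      (forall x y, d x y = d y x) &
      (forall x y z, d x y <= Num.max (d x z) (d z y))].

Definition spectrum (R : realType) (X : finType) (d : X -> X -> R) : seq R :=
  undup [seq d p.1 p.2 | p <- enum [pred p : X * X | p.1 != p.2]].

(* diam X = sup { d(x,y) } (a max, X finite; distances are >= 0). *)
Definition diam (R : realType) (X : finType) (d : X -> X -> R) : R :=
  \big[Num.max/0]_(p : X * X) d p.1 p.2.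

Definition in_classU (R : realType) (X : finType) (d : X -> X -> R) : Prop :=
  is_ultrametric d /\ size (spectrum d) = (#|X| - 1)%N.

Definition diametral_edge (R : realType) (X : finType) (d : X -> X -> R) : rel X :=
  fun u v => d u v == diam d.

Definition complete_bipartite (T : finType) (e : rel T) : Prop :=
  exists A B : {set T},
    [/\ A != set0, B != set0, [disjoint A & B], A :|: B = [set: T] &
        forall u v, e u v <-> ((u \in A) && (v \in B)) || ((u \in B) && (v \in A))].

(* Main.v *)
Require Import Defs.
From mathcomp Require Import all_boot all_order all_algebra.
From mathcomp Require Import reals.
From mathcomp Require Import zify.
Set Implicit Arguments. Unset Strict Implicit. Unset Printing Implicit Defensive.
Import Order.TTheory GRing.Theory Num.Theory.
Local Open Scope ring_scope.

Section S.
Variables (R : realType) (X : finType) (d : X -> X -> R).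
Hypothesis U : is_ultrametric d.

Definition spS (S : {set X}) : seq R :=
  [seq d p.1 p.2 | p <- enum [pred p : X * X | [&& p.1 \in S, p.2 \in S & p.1 != p.2]]].

Definition sz S := size (undup (spS S)).

Lemma spSP (S : {set X}) v : reflect (exists x y, [/\ x \in S, y \in S, x != y & v = d x y]) (v \in spS S).
Proof.
apply: (iffP mapP).
  by move=> [[x y]]; rewrite mem_enum /= => /and3P[? ? ?] ->; exists x, y.
by move=> [x [y [? ? ? ->]]]; exists (x, y); rewrite // mem_enum /= ; apply/and3P.
Qed.

Lemma sub_sz (s1 s2 : seq R) : {subset s1 <= s2} -> (size (undup s1) <= size (undup s2))%N.
Proof.
move=> H; apply: uniq_leq_size; first exact: undup_uniq.
by move=> v; rewrite !mem_undup; apply: H.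
Qed.

Lemma dsym x y : d x y = d y x. Proof. by case: U. Qed.
Lemma dge0 x y : 0 <= d x y. Proof. by case: U. Qed.
Lemma d0 x y : d x y = 0 <-> x = y. Proof. by case: U. Qed.
Lemma dult x y z : d x y <= Num.max (d x z) (d z y). Proof. by case: U. Qed.

Lemma step (S : {set X}) x t : x \in S -> t \in S -> t != x ->
  exists r, {subset spS S <= r :: spS (S :\ x)}.
Proof.
move=> xS tS tx.
have tS' : t \in S :\ x by rewrite !inE tx.
case: (arg_minP (fun y => d x y) tS') => y yS' ymin.
exists (d x y) => v /spSP [a [b [aS bS ab ->]]].
rewrite inE.
have key : forall z, z \in S -> z != x -> (d x z == d x y) || (d x z \in spS (S :\ x)).
  move=> z zS zx.
  have zS' : z \in S :\ x by rewrite !inE zx.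
  have h1 := ymin z zS'.
  case: (leP (d y z) (d x y)) => hyz.
    apply/orP; left; apply/eqP/le_anti; rewrite h1 andbT.
    by apply: le_trans (dult x z y) _; rewrite ge_max lexx.
  apply/orP; right.
  have -> : d x z = d y z.
    have h2 := dult y z x.
    have h3 := dult x z y.
    apply/le_anti/andP; split.
      by apply: le_trans h3 _; rewrite ge_max (ltW hyz) lexx.
    move: h2; rewrite [d y x]dsym le_max => /orP[h|//].
    by move: (lt_le_trans hyz h); rewrite ltxx.
  apply/spSP; exists y, z; split => //.
  apply/negP => /eqP eyz; move: hyz; rewrite eyz.
  have -> : d z z = 0 by apply/d0.
  by rewrite ltNge dge0.
case: (eqVneq a x) => [eax|ax].
  by subst a; apply: key; rewrite // eq_sym.
case: (eqVneq b x) => [ebx|bx].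
  by subst b; rewrite dsym; apply: key.
apply/orP; right; apply/spSP; exists a, b; split => //; rewrite !inE ?ax ?bx //.
Qed.

Lemma undup_cons_le (r : R) s : (size (undup (r :: s)) <= (size (undup s)).+1)%N.
Proof. by rewrite /=; case: ifP => _ //; apply: leqW. Qed.

Lemma grow n : forall S T : {set X}, T \subset S -> T != set0 -> #|S :\: T| = n ->
  (sz S <= sz T + n)%N.
Proof.
elim: n => [|n IH] S T TS T0 hc.
  have -> : S = T.
    apply/eqP; rewrite eqEsubset TS andbT.
    move: hc => /eqP; rewrite cards_eq0 => /eqP h.
    apply/subsetP => z zS; apply: contraT => zT.
    have : z \in S :\: T by rewrite inE zT zS.
    by rewrite h inE.
  by rewrite addn0.
have : (0 < #|S :\: T|)%N by rewrite hc.
case/card_gt0P => x; rewrite inE => /andP [xT xS].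
case/set0Pn: T0 => t tT.
have tS : t \in S by apply: (subsetP TS).
have tx : t != x by apply: contraNneq xT => <-.
case: (step xS tS tx) => r hr.
have TS' : T \subset S :\ x.
  by apply/subsetP => z zT; rewrite !inE (subsetP TS) // andbT; apply: contraNneq xT => <-.
have hc' : #|(S :\ x) :\: T| = n.
  have : (#|S :\: T| = #|(S :\ x) :\: T| + 1)%N.
    rewrite (cardsD1 x (S :\: T)) inE xT xS /= addnC.
    by congr (_ + _)%N; apply: eq_card => z; rewrite !inE; case: (z == x); case: (z \in T).
  by rewrite hc addn1 => -[].
have T0' : T != set0 by apply/set0Pn; exists t.
have := IH _ _ TS' T0' hc'.
have := sub_sz hr; have := undup_cons_le r (spS (S :\ x)).
rewrite /sz addnS; move=> h1 h2 h3.
by apply: leq_trans h2 (leq_trans h1 _).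
Qed.


Lemma le_diam x y : d x y <= diam d.
Proof.
rewrite /diam; have : (x, y) \in index_enum (prod X X) by rewrite mem_index_enum.
elim: (index_enum _) => [//|a s IH]; rewrite big_cons inE => /orP[/eqP <-|/IH h].
  by rewrite le_max lexx.
by rewrite le_max h orbT.
Qed.

Lemma diam_att : diam d = 0 \/ exists x y, diam d = d x y.
Proof.
rewrite /diam; elim: (index_enum _) => [|a s IH]; rewrite ?big_nil ?big_cons; first by left.
case: (leP (d a.1 a.2) (\big[Num.max/0]_(j <- s) d j.1 j.2)) => h.
  by [].
by right; exists a.1, a.2.
Qed.

Lemma spec_le : (size (spectrum d) <= sz setT)%N.
Proof.
apply: sub_sz => v /mapP [[x y]]; rewrite mem_enum /= => xy ->.
by apply/spSP; exists x, y; rewrite !inE.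
Qed.

Lemma sz_triple (a u v : X) D : d a u = D -> d a v = D -> d u v = D ->
  (sz [set a; u; v] <= 1)%N.
Proof.
move=> h1 h2 h3.
have hxx w : d w w = 0 by apply/d0.
have -> : 1%N = size (undup [:: D]) by [].
apply: sub_sz => w /spSP [x [y [xT yT xy ->]]]; rewrite inE.
move: xT yT xy; rewrite !inE => /orP[/orP[]|] /eqP -> /orP[/orP[]|] /eqP -> //;
  rewrite ?eqxx // => _; rewrite ?h1 ?h2 ?h3 // dsym ?h1 ?h2 ?h3 //.
Qed.

End S.


Theorem corollary5 (R : realType) (X : finType) (d : X -> X -> R) :
  (2 <= #|X|)%N -> in_classU d -> complete_bipartite (diametral_edge d).
Proof.
move=> hX [U hsz].
set D := diam d.
have leD x y : d x y <= D := le_diam d x y.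
have dxx w : d w w = 0 by apply/(d0 U).
case/card_gt1P: hX => x0 [y0 [_ _ xy0]].
have Dpos : 0 < D.
  apply: lt_le_trans (leD x0 y0); rewrite lt_neqAle dge0 // andbT.
  by apply/eqP => /esym /(d0 U) /eqP; rewrite (negbTE xy0).
have [a [q haq]] : exists a q, d a q = D.
  case: (diam_att d) => [h|[x [y h]]]; last by exists x, y.
  by move: Dpos; rewrite /D h ltxx.
exists [set v | d a v < D], [set v | d a v == D]; split.
- by apply/set0Pn; exists a; rewrite inE dxx.
- by apply/set0Pn; exists q; rewrite inE haq.
- by rewrite disjoint_subset; apply/subsetP => v; rewrite !inE => h; rewrite lt_eqF.
- apply/setP => v; rewrite !inE; move: (leD a v); rewrite le_eqVlt => /orP[->|->] //.
  by rewrite orbT.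
move=> u v; rewrite /diametral_edge !inE -/D.
suff -> : (d u v == D) = ((d a u < D) && (d a v == D) || (d a u == D) && (d a v < D)) by [].
have tri w : (d a w < D) = ~~ (d a w == D).
  by move: (leD a w); rewrite le_eqVlt => /orP[/eqP ->|h]; rewrite ?ltxx ?eqxx // lt_eqF.
have tri' w : (d a w == D) = ~~ (d a w < D) by rewrite tri negbK.
have ua' := tri' u; have va' := tri' v.
case ua: (d a u < D); case va: (d a v < D); rewrite ua va /= in ua' va'; rewrite ua' va' /=.
- apply: lt_eqF; apply: le_lt_trans (dult U u v a) _.
  by rewrite gt_max (dsym U) ua.
- apply/eqP/le_anti; rewrite leD /=.
  move: (dult U a v u); rewrite (eqP va') le_max => /orP[h|//].
  by move: (lt_le_trans ua h); rewrite ltxx.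
- apply/eqP/le_anti; rewrite leD /=.
  move: (dult U a u v); rewrite (eqP ua') le_max => /orP[h|h].
    by move: (lt_le_trans va h); rewrite ltxx.
  by rewrite (dsym U).
- apply/negP => /eqP huv.
  have uv : u != v by apply/negP => /eqP e; move: huv Dpos; rewrite e dxx => <-; rewrite ltxx.
  have au : a != u by apply/negP => /eqP e; move: ua' Dpos; rewrite e dxx => /eqP <-; rewrite ltxx.
  have av : a != v by apply/negP => /eqP e; move: va' Dpos; rewrite e dxx => /eqP <-; rewrite ltxx.
  set T := [set a; u; v].
  have h3 := sz_triple U (eqP ua') (eqP va') huv.
  have cT : #|T| = 3%N.
    by rewrite /T setUC cardsU1 cards2 !inE au (eq_sym v a) (eq_sym v u) (negbTE av) (negbTE uv).
  have T0 : T != set0 by apply/set0Pn; exists a; rewrite !inE eqxx.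
  have := grow U (subsetT T) T0 (erefl _).
  have hC := cardsC T. have hmax := max_card (mem T).
  have := spec_le d.
  rewrite hsz setTD; move: hC hmax; rewrite cT => hC hmax.
  rewrite -/T in h3. lia.
Qed.
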